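(* Let $\Sigma$ be a one-sided subshift of finite type and let $\mathbf B,\mathbf B'$ be Bowen quasicocycles on $\Sigma$. Then $\mathbf B\sim\mathbf B'$ if and only if $\mu_{\mathbf a}(\mathbf B)=\mu_{\mathbf a}(\mathbf B')$ for every periodic word $\mathbf a$.
   Context: $\Sigma=\{(x_n)_{n\ge0}:R_{x_nx_{n+1}}=1\}$ with $R$ an irreducible aperiodic $0/1$ matrix on the alphabet $\{1,\dots,d\}$, $\tau$ the shift, $[x]_n$ the length-$n$ cylinder of $x$. For $B:\Sigma\to\mathbb R$, $\mathrm{var}_n(B)=\sup\{|B(x)-B(y)|:[x]_n=[y]_n\}$. A (Bowen) quasicocycle is a sequence $\mathbf B=(B_n)_{n\ge1}$ of bounded Borel functions with $\sup_{n,m}\sup_x|B_{n+m}(x)-B_n(x)-B_m(\tau^nx)|<\infty$ and $\sup_n\mathrm{var}_n(B_n)<\infty$. $\mathbf B\sim\mathbf B'$ (cohomologous) if $\sup_n\|B_n-B'_n\|_\infty<\infty$. For $\mu$ a $\tau$-invariant probability, $\mu(\mathbf B)=\lim_n\frac1n\int B_n\,d\mu$. A finite allowed word $\mathbf a=a_1\cdots a_n$ is periodic if $R_{a_na_1}=1$; then $\mathbf a\mathbf a\mathbf a\cdots$ is a periodic point of period $n$ and $\mu_{\mathbf a}$ is the invariant probability equidistributed on its orbit. *)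

(* Defs.v *)
From HB Require Import structures.
From mathcomp Require Import all_boot all_order all_algebra.
From mathcomp Require Import all_classical all_reals all_analysis.
Set Implicit Arguments. Unset Strict Implicit. Unset Printing Implicit Defensive.
Import Order.TTheory GRing.Theory Num.Theory numFieldNormedType.Exports.
Local Open Scope classical_set_scope.
Local Open Scope ring_scope.

(* Alphabet {1,...,d} is represented by 'I_d; the 0/1 matrix R by a
   boolean matrix A : 'M[bool]_d (A i j = true  <->  R_ij = 1). *)

Definition apath d (A : 'M[bool]_d) (n : nat) (i j : 'I_d) : Prop :=
  exists w : nat -> 'I_d,
    [/\ w 0%N = i, w n = j & forall k, (k < n)%N -> A (w k) (w k.+1)].

Definition irreducible d (A : 'M[bool]_d) : Prop :=
  forall i j : 'I_d, exists n, (0 < n)%N /\ apath A n i j.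

Definition aperiodic d (A : 'M[bool]_d) : Prop :=
  forall (i : 'I_d) (k : nat),
    (forall n, (0 < n)%N -> apath A n i i -> (k %| n)%N) -> k = 1%N.

Definition Sigma d (A : 'M[bool]_d) :=
  {x : nat -> 'I_d | forall n, A (x n) (x n.+1)}.

Definition tau d (A : 'M[bool]_d) (x : Sigma A) : Sigma A :=
  exist (fun y : nat -> 'I_d => forall n, A (y n) (y n.+1)) (fun n => sval x n.+1) (fun n => proj2_sig x n.+1).

Definition cyl d (A : 'M[bool]_d) (n : nat) (x : Sigma A) : set (Sigma A) :=
  [set y | forall k, (k < n)%N -> sval y k = sval x k].

(* Borel sigma-algebra of Sigma (product topology); it is generated by the
   (countably many, clopen) cylinder sets *)
Definition borelSigma d (A : 'M[bool]_d) : set (set (Sigma A)) :=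
  <<s [set C | exists n x, C = cyl n x] >>.

Definition borel_fun (R : realType) d (A : 'M[bool]_d) (f : Sigma A -> R) :=
  forall U : set R, measurable U -> @borelSigma d A (f @^-1` U).

Definition var_le (R : realType) d (A : 'M[bool]_d) (n : nat) (f : Sigma A -> R)
  (C : R) := forall x y : Sigma A, cyl n x y -> `|f x - f y| <= C.

(* Bowen quasicocycle; B n is meaningful for n >= 1 *)
Definition quasicocycle (R : realType) d (A : 'M[bool]_d)
  (B : nat -> Sigma A -> R) : Prop :=
  [/\ forall n, (0 < n)%N -> borel_fun (B n),
      forall n, (0 < n)%N -> exists M : R, forall x, `|B n x| <= M,
      exists C : R, forall n m x, (0 < n)%N -> (0 < m)%N ->
         `|B (n + m)%N x - B n x - B m (iter n (@tau d A) x)| <= C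
    & exists C : R, forall n, (0 < n)%N -> var_le n (B n) C].

Definition cohomologous (R : realType) d (A : 'M[bool]_d)
  (B B' : nat -> Sigma A -> R) : Prop :=
  exists C : R, forall n x, (0 < n)%N -> `|B n x - B' n x| <= C.

(* periodic word a_1...a_p, p = n.+1, encoded as w : 'I_p -> 'I_d;
   ordS k = k+1 mod p, so this includes the wrap-around R_{a_p a_1} = 1 *)
Definition periodic_word d (A : 'M[bool]_d) n (w : 'I_n.+1 -> 'I_d) : Prop :=
  forall k : 'I_n.+1, A (w k) (w (ordS k)).

Lemma perpt_subproof d (A : 'M[bool]_d) n (w : 'I_n.+1 -> 'I_d) :
  periodic_word A w ->
  forall k, A (w (inord (k %% n.+1))) (w (inord (k.+1 %% n.+1))).
Proof.
move=> Hw k.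
have -> : (inord (k.+1 %% n.+1) : 'I_n.+1) = ordS (inord (k %% n.+1)).
  apply: val_inj => /=.
  rewrite inordK; last by rewrite ltn_mod.
  rewrite inordK; last by rewrite ltn_mod.
  by rewrite -addn1 -modnDml addn1.
exact: Hw.
Qed.

Definition perpt d (A : 'M[bool]_d) n (w : 'I_n.+1 -> 'I_d)
  (Hw : periodic_word A w) : Sigma A :=
  exist (fun y : nat -> 'I_d => forall m, A (y m) (y m.+1)) (fun k => w (inord (k %% n.+1))) (perpt_subproof Hw).

(* integral against mu_a, the invariant probability equidistributed on the
   orbit of the periodic point (period p = n.+1) *)
Definition mu_int (R : realType) d (A : 'M[bool]_d) n (w : 'I_n.+1 -> 'I_d)
  (Hw : periodic_word A w) (f : Sigma A -> R) : R :=
  (n.+1%:R)^-1 * \sum_(k < n.+1) f (iter k (@tau d A) (perpt Hw)).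

Definition mu_qc (R : realType) d (A : 'M[bool]_d) n (w : 'I_n.+1 -> 'I_d)
  (Hw : periodic_word A w) (B : nat -> Sigma A -> R) : R :=
  limn (fun m : nat => (m%:R)^-1 * mu_int Hw (B m)).

(* Main.v *)
Require Import Defs.
From HB Require Import structures.
From mathcomp Require Import all_boot all_order all_algebra.
From mathcomp Require Import all_classical all_reals all_analysis.
From mathcomp Require Import ring lra zify.
Set Implicit Arguments. Unset Strict Implicit. Unset Printing Implicit Defensive.
Import Order.TTheory GRing.Theory Num.Theory numFieldNormedType.Exports.
Local Open Scope classical_set_scope.
Local Open Scope ring_scope.

Section Fek.
Variable R : realType.
Variables (a : nat -> R) (C : R).
Hypothesis Ha : forall n m, (0 < n)%N -> (0 < m)%N -> `|a (n + m) - a n - a m| <= C.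

Lemma C_ge0 : 0 <= C.
Proof. by have := @Ha 1%N 1%N isT isT; apply: le_trans. Qed.

Lemma mult_bound n k : (0 < n)%N ->
  `|a (k.+1 * n) - k.+1%:R * a n| <= k%:R * C.
Proof.
move=> n0; elim: k => [|k IH]; first by rewrite mul1n mul1r subrr normr0 mul0r.
rewrite mulSn addnC.
have -> : a (k.+1 * n + n) - k.+2%:R * a n =
  (a (k.+1 * n + n) - a (k.+1 * n) - a n) + (a (k.+1 * n) - k.+1%:R * a n).
  by rewrite -[k.+2]addn1 natrD mulrDl mul1r; ring.
have -> : k.+1%:R * C = C + k%:R * C by rewrite -addn1 natrD mulrDl mul1r addrC.
apply: le_trans (ler_normD _ _) _; apply: lerD => //.
by apply: Ha => //; rewrite muln_gt0 n0.
Qed.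

Definition u n := (n%:R)^-1 * a n.

Lemma u_mul n m : (0 < n)%N -> (0 < m)%N -> `|u (m * n) - u n| <= C / n%:R.
Proof.
move=> n0; case: m => // k _.
have hn : (0 : R) < n%:R by rewrite ltr0n.
have hk : (0 : R) < k.+1%:R by rewrite ltr0n.
have -> : u (k.+1 * n) - u n = (a (k.+1 * n) - k.+1%:R * a n) / (k.+1%:R * n%:R).
  rewrite /u natrM; field; apply/andP; split; rewrite gt_eqF //.
rewrite normrM (ger0_norm (x := _^-1)); last by rewrite invr_ge0 mulr_ge0 // ltW.
rewrite ler_pdivrMr; last by rewrite mulr_gt0.
apply: le_trans (mult_bound k n0) _.
have -> : C / n%:R * (k.+1%:R * n%:R) = k.+1%:R * C.
  by field; rewrite gt_eqF.
by rewrite ler_wpM2r ?C_ge0 // ler_nat.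
Qed.

Lemma u_cauchy n m : (0 < n)%N -> (0 < m)%N -> `|u n - u m| <= C / n%:R + C / m%:R.
Proof.
move=> n0 m0.
have -> : u n - u m = - (u (m * n) - u n) + (u (n * m) - u m) by rewrite mulnC; ring.
apply: le_trans (ler_normD _ _) _; rewrite normrN.
by apply: lerD; [exact: u_mul | exact: u_mul].
Qed.

Lemma small_eventually (e : R) : 0 < e -> \forall n \near \oo, (0 < n)%N /\ C / n%:R < e.
Proof.
move=> e0.
near=> n.
have n0 : (0 < n)%N.
  by near: n; exists 1%N.
split => //.
have hn : (0 : R) < n%:R by rewrite ltr0n.
rewrite ltr_pdivrMr //.
rewrite mulrC -ltr_pdivrMr //.
near: n; exact: nbhs_infty_gtr.
Unshelve. all: by end_near.
Qed.

Lemma u_cvg : cvgn u.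
Proof.
apply/cauchy_cvgP; apply/cauchy_ballP => e e0; rewrite near_map2.
have e2 : 0 < e / 2 by rewrite divr_gt0.
near=> n m.
rewrite -ball_normE /=.
have [n0 hn] : (0 < n)%N /\ C / n%:R < e / 2 by near: n; exact: small_eventually.
have [m0 hm] : (0 < m)%N /\ C / m%:R < e / 2 by near: m; exact: small_eventually.
apply: le_lt_trans (u_cauchy n0 m0) _.
by rewrite [X in _ < X]splitr; apply: ltrD.
Unshelve. all: by end_near.
Qed.

Lemma u_lim_bound n : (0 < n)%N -> `|a n - n%:R * limn u| <= C.
Proof.
move=> n0.
have hn : (0 : R) < n%:R by rewrite ltr0n.
have -> : a n - n%:R * limn u = n%:R * (u n - limn u).
  by rewrite /u mulrBr mulrA divff ?gt_eqF // mul1r.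
rewrite normrM ger0_norm; last exact: ltW hn. rewrite -ler_pdivlMl // mulrC.
apply/ler_addgt0Pr => e e0.
have e2 : 0 < e / 2 by rewrite divr_gt0.
near \oo => m.
have [m0 hm] : (0 < m)%N /\ C / m%:R < e / 2 by near: m; exact: small_eventually.
have hl : `|limn u - u m| < e / 2 by near: m; exact: cvgr_dist_lt u_cvg _ e2.
have -> : u n - limn u = (u n - u m) - (limn u - u m) by ring.
apply: le_trans (ler_normB _ _) _.
apply: le_trans (lerD (u_cauchy n0 m0) (ltW hl)) _.
rewrite -addrA lerD2l [X in _ <= X]splitr lerD2r; exact: ltW.
Unshelve. all: by end_near.
Qed.
End Fek.

Section Dyn.
Variables (d : nat) (A : 'M[bool]_d).

Lemma sval_iter k (x : Sigma A) m : sval (iter k (@tau d A) x) m = sval x (k + m)%N.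
Proof.
elim: k m => [|k IH] m //=.
by rewrite IH addSnnS.
Qed.

Lemma Sigma_eq (x y : Sigma A) : sval x = sval y -> x = y.
Proof.
case: x => x hx; case: y => y hy /= E; subst y.
by rewrite (Prop_irrelevance hx hy).
Qed.

Variables (n : nat) (w : 'I_n.+1 -> 'I_d) (Hw : periodic_word A w).

Lemma perpt_val k : sval (perpt Hw) k = w (inord (k %% n.+1)).
Proof. by []. Qed.

Lemma iter_per : iter n.+1 (@tau d A) (perpt Hw) = perpt Hw.
Proof.
apply: Sigma_eq; apply: funext => m.
by rewrite sval_iter /= modnDl.
Qed.

Lemma sum_shift1 (R : realType) (g : Sigma A -> R) :
  \sum_(k < n.+1) g (iter k.+1 (@tau d A) (perpt Hw)) =
  \sum_(k < n.+1) g (iter k (@tau d A) (perpt Hw)).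
Proof.
rewrite big_ord_recr /= big_ord_recl /=.
have -> : tau (iter n (@tau d A) (perpt Hw)) = perpt Hw by exact: iter_per.
by rewrite addrC.
Qed.

Lemma sum_shift (R : realType) (g : Sigma A -> R) j :
  \sum_(k < n.+1) g (iter j (@tau d A) (iter k (@tau d A) (perpt Hw))) =
  \sum_(k < n.+1) g (iter k (@tau d A) (perpt Hw)).
Proof.
elim: j g => [|j IH] g //.
rewrite -(IH g) -(sum_shift1 (fun z => g (iter j (@tau d A) z))).
by apply: eq_bigr => k _; rewrite iterSr.
Qed.

End Dyn.

Section Avg.
Variable R : realType.

Lemma avg_bound n (f : 'I_n.+1 -> R) c C :
  (forall k, `|f k - c| <= C) -> `|(n.+1%:R)^-1 * \sum_(k < n.+1) f k - c| <= C.
Proof.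
move=> H.
have hp : (0 : R) < n.+1%:R by rewrite ltr0n.
have -> : (n.+1%:R)^-1 * \sum_(k < n.+1) f k - c =
          (n.+1%:R)^-1 * \sum_(k < n.+1) (f k - c).
  rewrite sumrB sumr_const card_ord mulrBr; congr (_ - _).
  by rewrite -mulr_natr; field; rewrite gt_eqF.
rewrite normrM ger0_norm; last by rewrite invr_ge0 ltW.
rewrite ler_pdivrMl // .
apply: le_trans (ler_norm_sum _ _ _) _.
have -> : n.+1%:R * C = \sum_(k < n.+1) C by rewrite sumr_const card_ord mulr_natl.
by apply: ler_sum => k _; exact: H.
Qed.
End Avg.

Section Per.
Variables (R : realType) (d : nat) (A : 'M[bool]_d).
Variables (B : nat -> Sigma A -> R) (C : R).
Hypothesis HC : forall n m x, (0 < n)%N -> (0 < m)%N ->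
         `|B (n + m)%N x - B n x - B m (iter n (@tau d A) x)| <= C.
Variables (n : nat) (w : 'I_n.+1 -> 'I_d) (Hw : periodic_word A w).

Lemma C0 : 0 <= C.
Proof. by have := HC (perpt Hw) (ltn0Sn 0) (ltn0Sn 0); apply: le_trans. Qed.

Lemma qa_mu p q : (0 < p)%N -> (0 < q)%N ->
  `|mu_int Hw (B (p + q)%N) - mu_int Hw (B p) - mu_int Hw (B q)| <= C.
Proof.
move=> p0 q0; rewrite /mu_int.
rewrite -(sum_shift Hw (B q) p).
have -> : forall (a b c : R), (n.+1%:R)^-1 * a - (n.+1%:R)^-1 * b - (n.+1%:R)^-1 * c
   = (n.+1%:R)^-1 * (a - b - c) - 0 by move=> a b c; ring.
rewrite -!sumrB; apply: avg_bound => k.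
by rewrite subr0; apply: HC.
Qed.

Lemma mu_close : `|mu_int Hw (B n.+1) - B n.+1 (perpt Hw)| <= C + C.
Proof.
rewrite /mu_int; apply: avg_bound => k.
case: k => [[|k] hk] /=.
  by rewrite subrr normr0 addr_ge0 ?C0.
set y := perpt Hw.
have E : B n.+1 (iter k.+1 (@tau d A) y) - B n.+1 y =
  (B (n.+1 + k.+1)%N y - B n.+1 y - B k.+1 (iter n.+1 (@tau d A) y))
  - (B (k.+1 + n.+1)%N y - B k.+1 y - B n.+1 (iter k.+1 (@tau d A) y)).
  by rewrite iter_per addnC; ring.
rewrite E; apply: le_trans (ler_normB _ _) _.
by apply: lerD; apply: HC.
Qed.
End Per.

Lemma build d (A : 'M[bool]_d) (x : Sigma A) N0 L0 (w' : nat -> 'I_d)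
  (w0 : w' 0%N = sval x N0) (wL : w' L0.+1 = sval x 0%N)
  (wstep : forall k, (k < L0.+1)%N -> A (w' k) (w' k.+1)) :
  exists (word : 'I_(N0 + L0).+1 -> 'I_d) (Hw : periodic_word A word),
    cyl N0.+1 x (perpt Hw).
Proof.
pose z k := if (k < N0.+1)%N then sval x k else w' (k - N0)%N.
have zstep : forall k, (k < (N0 + L0).+1)%N -> A (z k) (z k.+1).
  move=> k hk; rewrite /z.
  case: (ltngtP k N0) => hkN.
  - by rewrite ltnS (ltnW hkN) ltnS hkN; exact: (proj2_sig x k).
  - rewrite ltnS leqNgt hkN /= ltnS leqNgt ltnW //= subSn ?(ltnW hkN) //.
    apply: wstep; lia.
  - subst k; rewrite ltnSn ltnn subSn // subnn -w0.
    exact: wstep.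
have zper : z (N0 + L0).+1 = z 0%N.
  rewrite /z /= ltnS leqNgt ltnS leq_addr /=.
  by have -> : ((N0 + L0).+1 - N0 = L0.+1)%N by lia.
exists (fun k => z (val k)).
have Hw : periodic_word A (fun k : 'I_(N0 + L0).+1 => z (val k)).
  move=> k /=.
  have := zstep k (ltn_ord k).
  case: (ltngtP k.+1 (N0 + L0).+1) => h.
  - by rewrite modn_small.
  - by have := ltn_ord k; lia.
  - by rewrite h modnn -zper.
exists Hw => k hk /=.
rewrite inordK ?ltn_pmod // modn_small; last by lia.
by rewrite /z hk.
Qed.

Ltac nrm h := rewrite ler_norml in h; case/andP: h => ? ?.

Unset Implicit Arguments.
Theorem mainTheorem8 (R : realType) (d : nat) (A : 'M[bool]_d)
  (HAirr : irreducible A) (HAaper : aperiodic A)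
  (B B' : nat -> Sigma A -> R)
  (HB : quasicocycle B) (HB' : quasicocycle B') :
  cohomologous B B' <->
  (forall (n : nat) (w : 'I_n.+1 -> 'I_d) (Hw : periodic_word A w),
      mu_qc Hw B = mu_qc Hw B').
Proof.
case: HB => _ HBb [C1 HC1] [V1 HV1].
case: HB' => _ HBb' [C2 HC2] [V2 HV2].
have fek : forall (Bx : nat -> Sigma A -> R) Cx,
  (forall n m x, (0 < n)%N -> (0 < m)%N ->
         `|Bx (n + m)%N x - Bx n x - Bx m (iter n (@tau d A) x)| <= Cx) ->
  forall n (w : 'I_n.+1 -> 'I_d) (Hw : periodic_word A w) m, (0 < m)%N ->
  `|mu_int Hw (Bx m) - m%:R * mu_qc Hw Bx| <= Cx.
  move=> Bx Cx HCx n w Hw m m0.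
  exact: (u_lim_bound (qa_mu HCx Hw) m0).
split.
- case=> Cc HCc n w Hw.
  set L := mu_qc Hw B; set L' := mu_qc Hw B'.
  have key : forall m, (0 < m)%N -> m%:R * `|L - L'| <= C1 + C2 + Cc.
    move=> m m0.
    have h1 := fek _ _ HC1 n w Hw m m0.
    have h2 := fek _ _ HC2 n w Hw m m0.
    have h3 : `|mu_int Hw (B m) - mu_int Hw (B' m)| <= Cc.
      have -> : mu_int Hw (B m) - mu_int Hw (B' m) =
        (n.+1%:R)^-1 * \sum_(k < n.+1) (B m (iter k (@tau d A) (perpt Hw))
                    - B' m (iter k (@tau d A) (perpt Hw))) - 0.
        by rewrite /mu_int sumrB subr0 mulrBr.
      by apply: avg_bound => k; rewrite subr0; apply: HCc.
    have -> : m%:R * `|L - L'| = `|m%:R * L - m%:R * L'|.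
      by rewrite -mulrBr normrM ger0_norm.
    rewrite -/L -/L' in h1 h2.
    nrm h1; nrm h2; nrm h3; rewrite ler_norml; apply/andP; split; lra.
  apply/eqP; rewrite -subr_eq0 -normr_eq0; apply/eqP.
  apply/eqP; rewrite eq_le normr_ge0 andbT leNgt; apply/negP => hlt.
  near \oo => m.
  have m0 : (0 < m)%N by near: m; exists 1%N.
  have hm : (C1 + C2 + Cc) / `|L - L'| < m%:R by near: m; exact: nbhs_infty_gtr.
  rewrite ltr_pdivrMr // in hm.
  by have := key m m0; rewrite leNgt hm.
- move=> Hmu.
  have perb : forall n (w : 'I_n.+1 -> 'I_d) (Hw : periodic_word A w),
    `|B n.+1 (perpt Hw) - B' n.+1 (perpt Hw)| <= (C1 + C1) + (C2 + C2) + (C1 + C2).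
    move=> n w Hw.
    have h1 := mu_close HC1 Hw.
    have h2 := mu_close HC2 Hw.
    have h3 := fek _ _ HC1 n w Hw n.+1 isT.
    have h4 := fek _ _ HC2 n w Hw n.+1 isT.
    rewrite (Hmu n w Hw) in h3.
    nrm h1; nrm h2; nrm h3; nrm h4; rewrite ler_norml; apply/andP; split; lra.
  have /choice [Lf HLf] : forall ij : 'I_d * 'I_d, exists n,
      (0 < n)%N /\ apath A n ij.1 ij.2.
    by case=> i j; exact: HAirr.
  have bnd : forall (Bx : nat -> Sigma A -> R),
      (forall n, (0 < n)%N -> exists M : R, forall x, `|Bx n x| <= M) ->
      exists Mf : nat -> R, forall n, (0 < n)%N -> forall x, `|Bx n x| <= Mf n.
    move=> Bx HBx.
    have /choice [Mf HMf] : forall n, exists M : R, (0 < n)%N -> forall x, `|Bx n x| <= M.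
      move=> n; case: (posnP n) => [->|n0]; first by exists 0.
      by have [M HM] := HBx n n0; exists M.
    by exists Mf.
  have [Mf HMf] := bnd _ HBb.
  have [Mf' HMf'] := bnd _ HBb'.
  pose Ms := \sum_(ij : 'I_d * 'I_d) (`|Mf (Lf ij).-1| + `|Mf' (Lf ij).-1|).
  have HMs : forall ij, `|Mf (Lf ij).-1| + `|Mf' (Lf ij).-1| <= Ms.
    move=> ij; rewrite /Ms (bigD1 ij) //= lerDl.
    by apply: sumr_ge0 => k _; rewrite addr_ge0.
  exists (V1 + V2 + ((C1 + C1) + (C2 + C2) + (C1 + C2)) + Ms + C1 + C2).
  move=> N x; case: N => // N0 _.
  have HMs1 := HMs (sval x N0, sval x 0%N).
  have := HLf (sval x N0, sval x 0%N).
  case EL : (Lf (sval x N0, sval x 0%N)) HMs1 => [|L0] HMs1 [h0 [w' [w0 wL wstep]]]; first by [].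
  have [word [Hw hcyl]] := build w0 wL wstep.
  have hP := perb _ _ Hw.
  have hv1 := HV1 N0.+1 isT x (perpt Hw) hcyl.
  have hv2 := HV2 N0.+1 isT x (perpt Hw) hcyl.
  move: (perpt Hw) hP hv1 hv2 => y hP hv1 hv2.
  clear hcyl Hw word w0 wL wstep h0 w'; case: L0 EL HMs1 hP => [|L0] EL HMs1 hP.
    rewrite addn0 in hP.
    have hm := normr_ge0 (Mf 0%N); have hm' := normr_ge0 (Mf' 0%N).
    nrm hP; nrm hv1; nrm hv2; rewrite ler_norml; apply/andP; split; lra.
  have hq1 := HC1 N0.+1 L0.+1 y isT isT.
  have hq2 := HC2 N0.+1 L0.+1 y isT isT.
  rewrite addSn in hq1 hq2.
  have hb1 := HMf L0.+1 isT (iter N0.+1 (@tau d A) y).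
  have hb2 := HMf' L0.+1 isT (iter N0.+1 (@tau d A) y).
  have hm := ler_norm (Mf L0.+1); have hm' := ler_norm (Mf' L0.+1).
  simpl in HMs1.
  nrm hP; nrm hv1; nrm hv2; nrm hq1; nrm hq2; nrm hb1; nrm hb2.
  rewrite ler_norml; apply/andP; split; lra.
Unshelve. all: by end_near.
Qed.
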